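(* If $d$ is a proper tree decomposition of a chordal graph $g$, then $\mathrm{bags}(d)=\mathrm{MaxClq}(g)$.
   Context: A graph is chordal if every cycle of length greater than three has a chord. $\mathrm{MaxClq}(g)$ is the set of maximal cliques of $g$ (cliques not strictly contained in another clique). A tree decomposition of $g$ is a pair $(t,\beta)$ with $t$ a tree and $\beta:V(t)\to 2^{V(g)}$ such that every node of $g$ lies in some $\beta(v)$, every edge of $g$ is contained in some $\beta(v)$, and whenever $v$ lies on the path between $u$ and $w$ in $t$, $\beta(u)\cap\beta(w)\subseteq\beta(v)$. The sets $\beta(v)$ are bags; $\mathrm{bags}(d)$ is the set of bags. Write $d_1\sqsubseteq d_2$ if every bag of $d_1$ is contained in some bag of $d_2$. $d'$ strictly subsumes $d$ if $d'\sqsubseteq d$ and $\mathrm{bags}(d)\not\subseteq\mathrm{bags}(d')$; $d$ is proper if no tree decomposition of $g$ strictly subsumes it. *)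

(* Defs.v *)
From mathcomp Require Import all_boot.
Set Implicit Arguments. Unset Strict Implicit. Unset Printing Implicit Defensive.

Definition simple_graph (T : finType) (e : rel T) : Prop :=
  symmetric e /\ irreflexive e.

Definition is_cycle (T : finType) (e : rel T) (c : seq T) : Prop :=
  3 <= size c /\ ucycle e c.

Definition has_chord (T : finType) (e : rel T) (c : seq T) : Prop :=
  exists x y, [/\ x \in c, y \in c, e x y, next c x != y & prev c x != y].

Definition chordal (T : finType) (e : rel T) : Prop :=
  forall c : seq T, is_cycle e c -> 3 < size c -> has_chord e c.

Definition clique (T : finType) (e : rel T) (K : {set T}) : bool :=
  [forall x in K, forall y in K, (x != y) ==> e x y].

Definition MaxClq (T : finType) (e : rel T) : {set {set T}} :=
  [set K | maxset (clique e) K].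

Definition is_tree (V : finType) (t : rel V) : Prop :=
  [/\ simple_graph t, (0 < #|V|)%N,
      (forall u w : V, connect t u w) &
      (forall c : seq V, ~ is_cycle t c)].

Definition on_path (V : finType) (t : rel V) (u w v : V) : Prop :=
  exists p : seq V, [/\ path t u p, last u p = w, uniq (u :: p) & v \in u :: p].

Definition tree_decomposition (T : finType) (e : rel T)
    (V : finType) (t : rel V) (beta : V -> {set T}) : Prop :=
  [/\ is_tree t,
      (forall x : T, exists v, x \in beta v),
      (forall x y : T, e x y -> exists v, (x \in beta v) && (y \in beta v)) &
      (forall u v w : V, on_path t u w v -> beta u :&: beta w \subset beta v)].

Definition bags (T : finType) (V : finType) (beta : V -> {set T}) : {set {set T}} :=
  [set beta v | v in V].

Definition td_le (T : finType) (V1 : finType) (beta1 : V1 -> {set T})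
    (V2 : finType) (beta2 : V2 -> {set T}) : Prop :=
  forall v1 : V1, exists v2 : V2, beta1 v1 \subset beta2 v2.

Definition strictly_subsumes (T : finType) (V' : finType) (beta' : V' -> {set T})
    (V : finType) (beta : V -> {set T}) : Prop :=
  td_le beta' beta /\ ~ (bags beta \subset bags beta').

Definition proper_td (T : finType) (e : rel T)
    (V : finType) (t : rel V) (beta : V -> {set T}) : Prop :=
  tree_decomposition e t beta /\
  forall (V' : finType) (t' : rel V') (beta' : V' -> {set T}),
    tree_decomposition e t' beta' -> ~ strictly_subsumes beta' beta.

(* Main.v *)
Require Import Defs.
From mathcomp Require Import all_boot zify.
Set Implicit Arguments. Unset Strict Implicit. Unset Printing Implicit Defensive.

Section Gen.
Variables (V : finType) (t : rel V).

Lemma rev_walk (st : symmetric t) u p w :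
  path t u p -> last u p = w ->
  path t w (rev (belast u p)) /\ w :: rev (belast u p) = rev (u :: p).
Proof.
move=> pp lp.
have E : w :: rev (belast u p) = rev (u :: p) by rewrite -rev_rcons -lp -lastI.
split=> //; rewrite -lp rev_path.
by rewrite (@eq_path _ _ t) // => a b; rewrite st.
Qed.

Lemma on_path_sym (st : symmetric t) u w v : on_path t u w v -> on_path t w u v.
Proof.
move=> [p [pp lp up vp]]; have [pp' E] := rev_walk st pp lp.
exists (rev (belast u p)); split=> //.
- by rewrite -(last_cons w w) E rev_cons last_rcons.
- by rewrite E rev_uniq.
- by rewrite E mem_rev.
Qed.

Lemma next_next_small (c : seq V) u : uniq c -> u \in c ->
  next c (next c u) = u -> size c <= 2.
Proof.
move=> uc uin.
have Ec : rot (index u c) c = u :: (drop (index u c).+1 c ++ take (index u c) c).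
  by rewrite /rot (drop_nth u) ?index_mem // nth_index.
set q := drop _ _ ++ _ in Ec.
have uc' : uniq (u :: q) by rewrite -Ec rot_uniq.
rewrite -!(next_rot (index u c) uc) Ec -(size_rot (index u c)) Ec.
case: q uc' {Ec} => [|y [|z r]] //= /andP[]; rewrite !inE !negb_or => /and3P[uy uz _] _.
rewrite eqxx; case: (y =P u) => [yu|_]; first by rewrite yu eqxx in uy.
by rewrite eqxx => zu; rewrite zu eqxx in uz.
Qed.

End Gen.

Definition ptrel (V : finType) (par : V -> V) : rel V :=
  fun u v => (u != v) && ((par u == v) || (par v == u)).

Definition rooted (V : finType) (par : V -> V) (r : V) :=
  par r = r /\ exists rho : V -> nat, forall u, u != r -> rho (par u) < rho u.

Lemma seq_max (V : eqType) (c : seq V) (f : V -> nat) : c != [::] ->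
  exists2 u, u \in c & forall z, z \in c -> f z <= f u.
Proof.
elim: c => // a [|b c] IH _.
  by exists a; rewrite ?inE // => z; rewrite inE => /eqP->.
have [u uin um] := IH isT.
case: (leqP (f a) (f u)) => fa.
  exists u; first by rewrite inE uin orbT.
  by move=> z; rewrite inE => /orP[/eqP->|/um].
exists a; first by rewrite inE eqxx.
move=> z; rewrite inE => /orP[/eqP->//|/um]; move=> h; exact: (leq_trans h (ltnW fa)).
Qed.

Section Rooted.
Variables (V : finType) (par : V -> V) (r : V).
Hypothesis (hr : rooted par r).

Lemma ptrel_sym : symmetric (ptrel par).
Proof. by move=> u v; rewrite /ptrel eq_sym orbC. Qed.

Lemma ptrel_irr : irreflexive (ptrel par).
Proof. by move=> u; rewrite /ptrel eqxx. Qed.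

Lemma rooted_conn u : connect (ptrel par) u r.
Proof.
case: hr => pr [rho hrho].
elim: {u}(rho u) {-2}u (leqnn (rho u)) => [|n IH] u hu.
  case: (u =P r) => [->|/eqP ur]; first exact: connect0.
  by have := hrho u ur; rewrite ltnNge (leq_trans hu).
case: (u =P r) => [->|/eqP ur]; first exact: connect0.
have lt := hrho u ur.
apply: (@connect_trans _ _ (par u)); last by apply: IH; rewrite -ltnS (leq_trans lt).
apply: connect1; rewrite /ptrel eqxx orTb andbT.
by apply/eqP=> E; move: lt; rewrite -E ltnn.
Qed.

Lemma rooted_is_tree : is_tree (ptrel par).
Proof.
case: (hr) => pr [rho hrho].
split.
- split; [exact: ptrel_sym | exact: ptrel_irr].
- by apply/card_gt0P; exists r.
- move=> u w; apply: (connect_trans (rooted_conn u)).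
  by rewrite (sym_connect_sym ptrel_sym); exact: rooted_conn.
- move=> c [sc /andP[cc uc]].
  have cn : c != [::] by case: c sc {cc uc}.
  have [u uin um] := @seq_max _ c rho cn.
  have key : forall z, z \in c -> ptrel par u z -> par u = z.
    move=> z zin /andP[uz /orP[/eqP//|/eqP pz]].
    have zr : z != r by apply: contraNneq uz => zr; rewrite -pz zr pr.
    by have := hrho z zr; rewrite pz ltnNge (um z zin).
  have e1 := key _ _ (next_cycle cc uin); rewrite mem_next in e1; have {}e1 := e1 uin.
  have pe : ptrel par u (prev c u) by rewrite ptrel_sym; exact: prev_cycle cc uin.
  have e2 := key _ _ pe; rewrite mem_prev in e2; have {}e2 := e2 uin.
  have := next_next_small uc uin.
  rewrite -e1 e2 next_prev // => /(_ erefl).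
  by rewrite leqNgt (leq_trans _ sc).
Qed.
End Rooted.

Lemma first_hit (V : eqType) (t : rel V) (P : pred V) a p :
  path t a p -> P (last a p) ->
  exists q r, [/\ p = q ++ r, P (last a q) & all (predC P) (belast a q)].
Proof.
elim: p a => [|z p IH] a /=.
  by move=> _ Pa; exists [::], [::].
move=> /andP[az pz] Pl.
case Pa: (P a); first by exists [::], (z :: p); split.
have [q [r [-> Pq Aq]]] := IH z pz Pl.
by exists (z :: q), r; split => //=; rewrite Pa.
Qed.

Lemma uniq_path_of (V : finType) (t : rel V) u w :
  connect t u w -> exists p, [/\ path t u p, last u p = w & uniq (u :: p)].
Proof.
move=> /connectP[p pp ->]; case: (shortenP pp) => p' pp' up' _.
by exists p'.
Qed.

Lemma helly (T V : finType) (t : rel V) (beta : V -> {set T}) (v0 : V) (K : {set T}) :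
  (forall u w, connect t u w) ->
  (forall u v w, on_path t u w v -> beta u :&: beta w \subset beta v) ->
  (forall x y, x \in K -> y \in K -> exists v, (x \in beta v) && (y \in beta v)) ->
  exists v, K \subset beta v.
Proof.
move=> conn pp.
have [n hn] : exists n, #|K| <= n by exists #|K|.
elim: n K hn => [|n IH] K hK hxy.
  by exists v0; move: hK; rewrite leqn0 cards_eq0 => /eqP->; exact: sub0set.
case: (set_0Vmem K) => [->|[y yK]]; first by exists v0; exact: sub0set.
have [a Ha] : exists a, K :\ y \subset beta a.
  apply: IH.
    by move: hK; rewrite (cardsD1 y K) yK add1n ltnS.
  by move=> x z /setD1P[_ xK] /setD1P[_ zK]; exact: hxy.
have [b /andP[yb _]] := hxy y y yK yK.
have [p [pap lp up]] := uniq_path_of (conn a b).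
have yb' : y \in beta (last a p) by rewrite lp.
have [q [r [Ep Pq Aq]]] := @first_hit _ t (fun z => y \in beta z) a p pap yb'.
set m := last a q in Pq.
have uq : uniq (a :: q) by move: up; rewrite Ep -cat_cons cat_uniq => /andP[].
have paq : path t a q by move: pap; rewrite Ep cat_path => /andP[].
exists m; apply/subsetP => x xK.
case: (x =P y) => [->//|/eqP xy].
have [c /andP[xc yc]] := hxy x y xK yK.
have [s [pms lms ums]] := uniq_path_of (conn m c).
have Ts : forall z, z \in s -> y \in beta z.
  move=> z zs; have : on_path t m c z by exists s; split => //; rewrite inE zs orbT.
  by move/pp/subsetP/(_ y); apply; rewrite inE Pq yc.
have : on_path t a c m.
  exists (q ++ s); split.
  - by rewrite cat_path paq.
  - by rewrite last_cat.
  - move: (ums) => /= /andP[mns us].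
    rewrite -[_ && _]/(uniq (a :: q ++ s)) -cat_cons cat_uniq uq us andbT /=.
    apply/hasPn => z zs; rewrite lastI mem_rcons inE negb_or.
    apply/andP; split; first by apply/eqP => zm; move: mns; rewrite /m -zm zs.
    by apply/negP => zb; have := allP Aq z zb; rewrite /= Ts.
  - by rewrite -cat_cons mem_cat mem_last.
move/pp/subsetP/(_ x); apply; rewrite inE xc andbT.
by move/subsetP: Ha; apply; rewrite !inE xy.
Qed.

Section Enlarge.
Variables (T V : finType) (t : rel V) (beta : V -> {set T}).
Hypothesis tt : is_tree t.
Hypothesis pp : forall a b c, on_path t a c b -> beta a :&: beta c \subset beta b.
Variables (v u : V).
Hypothesis tvu : t v u.

Lemma on_path_same a b : on_path t a a b -> b = a.
Proof.
move=> [p [_ lp up bp]]; case: p lp up bp => [|z p] /=.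
  by move=> _ _; rewrite inE => /eqP.
move=> lp /andP[an _]; have := mem_last z p; rewrite lp => ain.
by rewrite ain in an.
Qed.

Lemma enlarge_core p c b : path t v p -> last v p = c -> uniq (v :: p) -> b \in p ->
  beta u :&: beta c \subset beta b.
Proof.
case: tt => [[st irr] _ _ nocyc] pvp lp up bp.
case uin: (u \in p).
  case/splitPr: uin pvp lp up bp => p1 p2.
  rewrite cat_path last_cat /= => /and3P[pv1 tlu pu2] lp up.
  rewrite mem_cat => /orP[bp1|bp2].
    exfalso; apply: (nocyc (v :: rcons p1 u)); split.
      by case: p1 bp1 {up pu2 pv1 tlu} => //= ? ? _; rewrite size_rcons.
    apply/andP; split.
      by rewrite /= !rcons_path last_rcons pv1 tlu /= st.
    have up' : uniq (((v :: p1) ++ [:: u]) ++ p2) by rewrite -catA; exact: up.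
    by move: up'; rewrite cat_uniq -cats1 => /andP[].
  apply: pp; exists p2; split => //.
  have up' : uniq ((v :: p1) ++ (u :: p2)) by exact: up.
  by move: up'; rewrite cat_uniq => /and3P[_ _].
have uv : u != v by apply: contraTneq tvu => ->; rewrite irr.
apply: pp; exists (v :: p); split => //=.
- by rewrite st tvu.
- by rewrite inE negb_or uv uin.
- by rewrite !inE bp !orbT.
Qed.
Lemma enlarge_pp : beta v \subset beta u -> forall a b c, on_path t a c b ->
  (fun z => if z == v then beta u else beta z) a :&:
  (fun z => if z == v then beta u else beta z) c \subset
  (fun z => if z == v then beta u else beta z) b.
Proof.
have st : symmetric t by case: tt => [[]].
move=> hvu a b c hab /=.
have core : forall c, c != v -> on_path t v c b -> b != v -> beta u :&: beta c \subset beta b.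
  move=> c' _ [p [pvp lp up bp]] bv; apply: enlarge_core pvp lp up _.
  by move: bp; rewrite inE (negbTE bv).
case: (b =P v) => [Eb|/eqP bv].
  rewrite Eb in hab.
  case: (a =P v) => [_|/eqP av]; first by rewrite subsetIl.
  case: (c =P v) => [_|/eqP cv]; first by rewrite subsetIr.
  apply: subset_trans hvu; exact: pp hab.
case: (a =P v) => [Ea|/eqP av]; case: (c =P v) => [Ec|/eqP cv].
- by rewrite Ea Ec in hab; have := on_path_same hab; move/eqP: bv.
- by apply: core => //; rewrite -Ea.
- rewrite setIC; apply: core => //.
  by apply: on_path_sym => //; rewrite -Ec.
- exact: pp.
Qed.
End Enlarge.

Lemma consecutive (V : eqType) (t : rel V) (P : pred V) a p :
  path t a p -> P a -> ~~ P (last a p) ->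
  exists x y, [/\ t x y, P x, ~~ P y & y \in a :: p].
Proof.
elim: p a => [|z p IH] a /=; first by move=> _ ->.
move=> /andP[az pz] Pa Pl.
case Pz: (P z).
  have [x [y [txy Px Py yin]]] := IH z pz Pz Pl.
  by exists x, y; split => //; rewrite inE yin orbT.
by exists a, z; split => //; rewrite ?Pz // !inE eqxx orbT.
Qed.

Lemma remove_bag (T V : finType) (e : rel T) (t : rel V) (B : {set T}) n :
  forall beta : V -> {set T}, #|[set z | beta z == B]| <= n ->
  tree_decomposition e t beta -> (exists w, B \proper beta w) ->
  exists beta' : V -> {set T}, [/\ tree_decomposition e t beta',
     (forall z, exists z', beta' z \subset beta z') & (forall z, beta' z != B)].
Proof.
elim: n => [|n IH] beta hc td [w hw];
  (case: (pickP (fun z => beta z == B)) => [v /eqP hv | none];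
   [ | by exists beta; split => // z; [exists z | rewrite none]]).
  by move: hc; rewrite leqn0 cards_eq0 => /eqP/setP/(_ v); rewrite !inE hv eqxx.
case: (td) => tt cov edg pp.
have tt' := tt; case: tt' => [[st irr] _ conn _].
have [p [pvp lp up]] := uniq_path_of (conn v w).
have Bz : forall z, z \in v :: p -> B \subset beta z.
  move=> z zin; have : on_path t v w z by exists p.
  move/pp; apply: subset_trans; rewrite hv.
  by rewrite subsetI subxx; move/properP: hw => [].
have hl : beta (last v p) != B by rewrite lp eq_sym (proper_neq hw).
have [x [y [txy /eqP Px Py yin]]] :=
  @consecutive _ t (fun z => beta z == B) v p pvp (introT eqP hv) hl.
have By : B \subset beta y by apply: Bz.
pose beta1 z := if z == x then beta y else beta z.
have sub1 : forall z, beta z \subset beta1 z.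
  by move=> z; rewrite /beta1; case: eqP => [->|_]; rewrite ?Px.
have td1 : tree_decomposition e t beta1.
  split => //.
  - by move=> x0; have [z hz] := cov x0; exists z; exact: (subsetP (sub1 z)).
  - move=> a b eab; have [z /andP[az bz]] := edg a b eab; exists z.
    by rewrite (subsetP (sub1 z) _ az) (subsetP (sub1 z) _ bz).
  - by apply: enlarge_pp => //; rewrite Px.
have yx : y != x by apply/eqP => E; move: Py; rewrite E Px eqxx.
have hc1 : #|[set z | beta1 z == B]| <= n.
  have sub : [set z | beta1 z == B] \subset [set z | beta z == B] :\ x.
    apply/subsetP => z; rewrite !inE /beta1.
    by case: (z =P x) => [_ /eqP E|_ ->]; [rewrite E eqxx in Py|].
  apply: leq_trans (subset_leq_card sub) _.
  move: hc; rewrite (cardsD1 x [set z | beta z == B]) inE Px eqxx add1n ltnS.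
  by [].
have hw1 : exists w, B \proper beta1 w.
  by exists y; rewrite /beta1 (negbTE yx) properEneq By andbT eq_sym.
have [b2 [td2 sub2 nb2]] := IH beta1 hc1 td1 hw1.
exists b2; split => // z.
have [z' hz'] := sub2 z.
exists (if z' == x then y else z'); apply: subset_trans hz' _.
by rewrite /beta1; case: (z' == x).
Qed.

Lemma shortcut (V : eqType) (e : rel V) s p i k : path e s p -> i < k -> k < size p ->
  e (nth s (s :: p) i) (nth s p k) ->
  [/\ path e s (take i p ++ drop k p), last s (take i p ++ drop k p) = last s p,
      subseq (take i p ++ drop k p) p & size (take i p ++ drop k p) < size p].
Proof.
move=> pp ik kp eyz.
have Ep : p = take k p ++ nth s p k :: drop k.+1 p by rewrite -drop_nth // cat_take_drop.
have lt : last s (take i p) = nth s (s :: p) i.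
  rewrite (last_nth s) size_take (ltn_trans ik kp).
  by rewrite -[s :: take i p]/(take i.+1 (s :: p)) nth_take.
split.
- rewrite cat_path take_path // lt (drop_nth s kp) /= eyz /=.
  by move: pp; rewrite {1}Ep cat_path /= => /and3P[].
- have Lp : last s p = last (nth s p k) (drop k.+1 p) by rewrite {1}Ep last_cat.
  by rewrite last_cat lt (drop_nth s kp) Lp.
- suff : subseq (take i p ++ drop k p) (take i p ++ drop i p) by rewrite cat_take_drop.
  apply: cat_subseq; first exact: subseq_refl.
  have -> : k = (k - i) + i by rewrite subnK // ltnW.
  by rewrite -drop_drop drop_subseq.
- rewrite size_cat size_take (ltn_trans ik kp) size_drop; lia.
Qed.

Section Chordal.
Variables (T : finType) (e : rel T).
Hypothesis hs : simple_graph e.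
Hypothesis hch : chordal e.

Lemma sep_uniq x s t0 : e x s -> e x t0 -> s != t0 -> ~~ e s t0 ->
  forall n p, size p <= n -> path e s p -> last s p = t0 -> uniq (s :: p) ->
  (forall z, z \in p -> (z == t0) || ((z != x) && ~~ e x z)) -> False.
Proof.
case: hs => st irr xs xt st0 nst.
elim=> [|n IH] p hn pp lp up hz.
  by case: p hn pp lp {up hz} => // _ _ /= E; rewrite E eqxx in st0.
set P := s :: p; set c := x :: P.
have xP : x \notin P.
  rewrite inE negb_or; apply/andP; split.
    by apply/eqP => E; move: xs; rewrite E irr.
  apply/negP => /hz /orP[/eqP E|/andP[]]; last by rewrite eqxx.
  by move: xt; rewrite E irr.
have uc : uniq c by rewrite /c cons_uniq xP up.
have cyc : cycle e c.
  by rewrite /c /P /= rcons_path pp lp xs /= st.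
have pn : 2 <= size p.
  case: p {hn hz up P c xP uc cyc} pp lp => [_ E|z [|w q]] //=; first by move: st0; rewrite -E /= eqxx.
  by move=> /andP[ez _] E; rewrite -E ez in nst.
have tP : t0 \in P by rewrite -lp mem_last.
have nxt : forall a, a \in P -> next c a = nth x P (index a P).+1.
  move=> a aP; rewrite next_nth inE aP orbT /=.
  by case: (x =P a) => // E; rewrite E aP in xP.
have nx : next c x = s by rewrite /c /P /= eqxx.
have nt : next c t0 = x.
  rewrite nxt // -lp index_last // nth_default //.
have nadj : forall a b, a \in c -> b \in c -> e a b -> next c a != b -> next c b != a -> False.
  have xcase : forall b, b \in c -> e x b -> (next c x == b) || (next c b == x).
    move=> b; rewrite inE => /orP[/eqP->|]; first by rewrite irr.
    rewrite inE => /orP[/eqP->|/hz]; first by move=> _; rewrite nx eqxx.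
    by case/orP => [/eqP->|/andP[_ /negbTE->]] // _; rewrite nt eqxx orbT.
  move=> a b ac bc eab nab nba.
  case: (a =P x) => [Ea|/eqP ax].
    by move: (xcase b bc); rewrite -Ea => /(_ eab); rewrite (negbTE nab) (negbTE nba).
  case: (b =P x) => [Eb|/eqP bx].
    by move: (xcase a ac); rewrite -Eb st => /(_ eab); rewrite (negbTE nab) (negbTE nba).
  have aP : a \in P by move: ac; rewrite inE (negbTE ax).
  have bP : b \in P by move: bc; rewrite inE (negbTE bx).
  wlog: a b eab nab nba aP bP {ac bc ax bx} / index a P < index b P.
    move=> H; case: (ltngtP (index a P) (index b P)) => h.
    - exact: (H a b).
    - by apply: (H b a) => //; rewrite st.
    - by move: eab; rewrite -(nth_index x aP) h nth_index // irr.
  move=> ij.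
  have jn : index b P != (index a P).+1.
    by apply: contra nab => /eqP hj; rewrite nxt // -hj nth_index.
  have jP : index b P < size P by rewrite index_mem.
  have Ea : nth s (s :: p) (index a P) = a by exact: nth_index.
  have Eb : nth s p (index b P).-1 = b.
    have := nth_index s bP; rewrite /P.
    by case: (index b (s :: p)) ij => // j.
  have ik : index a P < (index b P).-1.
    move: (index a P) (index b P) ij jn => i [|j] //=.
    by rewrite ltnS eqSS => ij jn; rewrite ltn_neqAle eq_sym jn ij.
  have kp : (index b P).-1 < size p.
    have : forall j, j < (size p).+1 -> j.-1 < size p.
      by case=> [|j] /=; [move=> _; apply: leq_trans pn | rewrite ltnS].
    by apply; exact: jP.
  have eab' : e (nth s (s :: p) (index a P)) (nth s p (index b P).-1) by rewrite Ea Eb.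
  have [pp' lp' subp' sz'] := shortcut pp ik kp eab'.
  apply: (IH (take (index a P) p ++ drop (index b P).-1 p)) => //.
  - by rewrite -ltnS (leq_trans sz' hn).
  - by rewrite lp'.
  - rewrite cons_uniq (subseq_uniq subp'); last by case/andP: up.
    rewrite andbT; apply/negP => /(mem_subseq subp') sp.
    by case/andP: up => /negP h _; exact: h sp.
  - by move=> z /(mem_subseq subp'); exact: hz.
have ic : is_cycle e c.
  split; last by rewrite /ucycle cyc uc.
  by rewrite /c /P /= !ltnS ltnW.
have sc : 3 < size c by rewrite /c /P /= !ltnS.
have [y0 [z0 [y0c z0c eyz ny py]]] := hch ic sc.
apply: (nadj y0 z0) => //; apply: contra py => /eqP <-; rewrite prev_next //.
Qed.
End Chordal.

Lemma sep_walk (T : finType) (e : rel T) (hs : simple_graph e) (hch : chordal e)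
  x s t0 p : e x s -> e x t0 -> s != t0 -> ~~ e s t0 -> path e s p -> last s p = t0 ->
  (forall z, z \in p -> [|| z == s, z == t0 | (z != x) && ~~ e x z]) -> False.
Proof.
move=> xs xt st0 nst pp; case: (shortenP pp) => p' pp' up' sub lp hz.
apply: (sep_uniq hs hch xs xt st0 nst (leqnn (size p')) pp' lp up').
move=> z zp'; have := hz z (sub z zp'); case/orP => [/eqP E|//].
by move: up' => /andP[/negP]; rewrite -E.
Qed.

Section Cross.
Variables (V : eqType) (t : rel V) (P : pred V) (p0 q0 : V).
Hypothesis hE : forall y z, t y z -> P y -> ~~ P z -> y = p0 /\ z = q0.

Lemma cross_stay y p : path t y p -> P y -> q0 \notin p -> all P p.
Proof.
elim: p y => //= z p IH y /andP[tyz pz] Py; rewrite inE negb_or => /andP[zq nq].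
case Pz: (P z); first by rewrite (IH z pz Pz nq).
by have [_ E] := hE tyz Py (negbT Pz); rewrite E eqxx in zq.
Qed.

Lemma cross_split y p : path t y p -> P y -> ~~ all P p ->
  exists p1 p2, [/\ p = p1 ++ q0 :: p2, all P p1, last y p1 = p0 & ~~ P q0].
Proof.
elim: p y => //= z p IH y /andP[tyz pz] Py.
case Pz: (P z) => /= nall.
  have [p1 [p2 [-> A1 L1 Q]]] := IH z pz Pz nall.
  by exists (z :: p1), p2; rewrite /= Pz A1.
have [E1 E2] := hE tyz Py (negbT Pz).
by exists [::], p; rewrite -E2 -E1 Pz.
Qed.
End Cross.

Section Cross2.
Variables (V : eqType) (t : rel V) (P : pred V) (p0 q0 : V).
Hypothesis st : symmetric t.
Hypothesis hE : forall y z, t y z -> P y -> ~~ P z -> y = p0 /\ z = q0.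

Lemma hEC : forall y z, t y z -> predC P y -> ~~ predC P z -> y = q0 /\ z = p0.
Proof.
move=> y z tyz /= Py; rewrite negbK => Pz.
have tzy : t z y by rewrite st.
by have [-> ->] := hE tzy Pz Py.
Qed.

Lemma same_side y p : path t y p -> P y -> P (last y p) -> uniq (y :: p) -> all P p.
Proof.
move=> pp Py Pl up; apply/negPn/negP => nall.
have [p1 [p2 [Ep A1 L1 Pq0]]] := cross_split hE pp Py nall.
have p0n : p0 \notin p2.
  move: up; rewrite Ep -cat_cons cat_uniq => /and3P[_ /hasPn h _].
  apply/negP => p0in; have := h _ (mem_behead (p0in : p0 \in behead (q0 :: p2))).
  by rewrite -L1 mem_last.
have pq2 : path t q0 p2 by move: pp; rewrite Ep cat_path => /andP[_ /= /andP[]].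
have := cross_stay hEC pq2 Pq0 p0n => A2.
move: Pl; rewrite Ep last_cat /=.
have := mem_last q0 p2; rewrite inE => /orP[/eqP->|/(allP A2)/= h]; first by rewrite (negbTE Pq0).
by rewrite (negbTE h).
Qed.
End Cross2.

Definition tdS (T V : finType) (e : rel T) (S : {set T}) (t : rel V) (beta : V -> {set T}) :=
  [/\ forall v, beta v \subset S, forall v, clique e (beta v),
      forall x, x \in S -> exists v, x \in beta v,
      forall x y, x \in S -> y \in S -> e x y -> exists v, (x \in beta v) && (y \in beta v) &
      forall u v w, on_path t u w v -> beta u :&: beta w \subset beta v].

Definition isl (A B : Type) (z : A + B) := if z is inl _ then true else false.

Lemma all_isl (A B : eqType) (p : seq (A + B)) : all (@isl A B) p -> exists q, p = map inl q.
Proof.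
elim: p => [|[x|x] p IH] //=; first by exists [::].
by move=> /IH[q ->]; exists (x :: q).
Qed.

Lemma all_isr (A B : eqType) (p : seq (A + B)) : all (predC (@isl A B)) p -> exists q, p = map inr q.
Proof.
elim: p => [|[x|x] p IH] //=; first by exists [::].
by move=> /IH[q ->]; exists (x :: q).
Qed.

Lemma eq_inl (A B : eqType) (x y : A) : (inl x == inl y :> A + B) = (x == y).
Proof. by apply/eqP/eqP => [[]|->]. Qed.
Lemma eq_inr (A B : eqType) (x y : B) : (inr x == inr y :> A + B) = (x == y).
Proof. by apply/eqP/eqP => [[]|->]. Qed.
Lemma eq_inlr (A B : eqType) (x : A) (y : B) : (inl x == inr y :> A + B) = false.
Proof. by apply/eqP. Qed.
Lemma eq_inrl (A B : eqType) (x : A) (y : B) : (inr y == inl x :> A + B) = false.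
Proof. by apply/eqP. Qed.

Section Glue.
Variables (T : finType) (e : rel T).
Hypothesis hs : simple_graph e.
Variables (VA VB : finType) (parA : VA -> VA) (rA : VA) (bA : VA -> {set T}).
Variables (parB : VB -> VB) (rB : VB) (bB : VB -> {set T}) (a : VA).
Hypotheses (hA : rooted parA rA) (hB : rooted parB rB).

Definition gpar (z : VB + VA) : VB + VA :=
  match z with inl u => if u == rB then inr a else inl (parB u) | inr u => inr (parA u) end.

Lemma gl_ll u v : ptrel gpar (inl u) (inl v) = ptrel parB u v.
Proof.
case: hB => pr _; rewrite /ptrel /=.
rewrite !eq_inl.
case: (u =P rB) => [->|ur]; case: (v =P rB) => [->|vr] //=; rewrite ?pr ?eqxx ?eq_inl ?eq_inr ?eq_inlr ?eq_inrl //=.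
- by case: (rB =P v) => // E; rewrite E in vr.
- by case: (rB =P u) => // E; rewrite E in ur.
Qed.

Lemma gl_rr u v : ptrel gpar (inr u) (inr v) = ptrel parA u v.
Proof. by []. Qed.


Lemma gl_lr u v : ptrel gpar (inl u) (inr v) = (u == rB) && (v == a).
Proof.
rewrite /ptrel /=; case: (u =P rB) => //= _.
by rewrite orbF eq_sym.
Qed.

Lemma gl_rooted : rooted gpar (inr rA).
Proof.
case: hA => prA [rhoA hA']; case: hB => prB [rhoB hB'].
split; first by rewrite /= prA.
exists (fun z => match z with inl u => rhoB u + (\max_(v : VA) rhoA v).+1 | inr u => rhoA u end).
case=> u /=; last by rewrite eq_inr => /hA'.
move=> _; case: (u =P rB) => [_|/eqP ur].
  by apply: ltn_addl; rewrite ltnS leq_bigmax.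
by rewrite ltn_add2r; apply: hB'.
Qed.

Lemma gl_path_l x p : path (ptrel gpar) (inl x) (map inl p) = path (ptrel parB) x p.
Proof. by elim: p x => //= y p IH x; rewrite gl_ll IH. Qed.

Lemma gl_path_r x p : path (ptrel gpar) (inr x) (map inr p) = path (ptrel parA) x p.
Proof. by elim: p x => //= y p IH x; rewrite gl_rr IH. Qed.

Definition gbeta (z : VB + VA) : {set T} := match z with inl u => bB u | inr u => bA u end.

Lemma gl_proj_l ux p : path (ptrel gpar) (inl ux) p -> uniq (inl ux :: p) -> all (@isl _ _) p ->
  forall v, v \in inl ux :: p -> exists q v', [/\ on_path (ptrel parB) ux (last ux q) v',
      last (inl ux) p = inl (last ux q) & v = inl v'].
Proof.
move=> pp up /all_isl[q Ep] v vin; rewrite Ep in pp up vin.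
rewrite -(map_cons inl) in vin up.
have /mapP[v' v'in ->] := vin.
exists q, v'; split => //; last by rewrite Ep last_map.
exists q; split => //; first by rewrite -gl_path_l.
by rewrite (map_inj_uniq (fun a b (h : inl a = inl b) => ltac:(by case: h))) in up.
Qed.

Lemma gl_proj_r ux p : path (ptrel gpar) (inr ux) p -> uniq (inr ux :: p) -> all (predC (@isl _ _)) p ->
  forall v, v \in inr ux :: p -> exists q v', [/\ on_path (ptrel parA) ux (last ux q) v',
      last (inr ux) p = inr (last ux q) & v = inr v'].
Proof.
move=> pp up /all_isr[q Ep] v vin; rewrite Ep in pp up vin.
rewrite -(map_cons inr) in vin up.
have /mapP[v' v'in ->] := vin.
exists q, v'; split => //; last by rewrite Ep last_map.
exists q; split => //; first by rewrite -gl_path_r.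
by rewrite (map_inj_uniq (fun a b (h : inr a = inr b) => ltac:(by case: h))) in up.
Qed.

Lemma gl_hE : forall y z, ptrel gpar y z -> isl y -> ~~ isl z -> y = inl rB /\ z = inr a.
Proof.
case=> [y|//] [//|z] /= h _ _.
by move: h; rewrite gl_lr => /andP[/eqP-> /eqP->].
Qed.

Lemma glue_td (SA SB N : {set T}) :
  tdS e SA (ptrel parA) bA -> tdS e SB (ptrel parB) bB ->
  N \subset bA a -> N \subset bB rB -> SA :&: SB \subset N ->
  (forall y z, y \in SA -> y \notin SB -> z \in SB -> z \notin SA -> ~~ e y z) ->
  tdS e (SA :|: SB) (ptrel gpar) gbeta.
Proof.
case: hs => st irr.
move=> [subA clA covA edgA ppA] [subB clB covB edgB ppB] NA NB SAB hyp.
have stt : symmetric (ptrel gpar) := @ptrel_sym _ gpar.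
have hEC := hEC stt gl_hE.
split.
- by case=> u /=; [rewrite (subset_trans (subB u)) // subsetUr | rewrite (subset_trans (subA u)) // subsetUl].
- by case=> u; [exact: clB | exact: clA].
- move=> x; rewrite inE => /orP[/covA[v hv]|/covB[v hv]]; [by exists (inr v) | by exists (inl v)].
- move=> x y xS yS exy.
  case xA: (x \in SA); case yA: (y \in SA).
  + by have [v hv] := edgA x y xA yA exy; exists (inr v).
  + have yB : y \in SB by move: yS; rewrite inE yA.
    case xB: (x \in SB); first by have [v hv] := edgB x y xB yB exy; exists (inl v).
    by have := hyp x y xA (negbT xB) yB (negbT yA); rewrite exy.
  + have xB : x \in SB by move: xS; rewrite inE xA.
    case yB: (y \in SB); first by have [v hv] := edgB x y xB yB exy; exists (inl v).
    by have := hyp y x yA (negbT yB) xB (negbT xA); rewrite st exy.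
  + have xB : x \in SB by move: xS; rewrite inE xA.
    have yB : y \in SB by move: yS; rewrite inE yA.
    by have [v hv] := edgB x y xB yB exy; exists (inl v).
have LL : forall ux wx p v, path (ptrel gpar) (inl ux) p -> last (inl ux) p = inl wx ->
    uniq (inl ux :: p) -> v \in inl ux :: p -> bB ux :&: bB wx \subset gbeta v.
  move=> ux wx p v pp lp up vin.
  have Pl : isl (last (inl ux) p) by rewrite lp.
  have al := same_side stt gl_hE pp (isT : isl (inl ux)) Pl up.
  have [q [v' [op lq ->]]] := gl_proj_l pp up al vin.
  by rewrite lp in lq; case: lq => ->; exact: ppB op.
have RR : forall ux wx p v, path (ptrel gpar) (inr ux) p -> last (inr ux) p = inr wx ->
    uniq (inr ux :: p) -> v \in inr ux :: p -> bA ux :&: bA wx \subset gbeta v.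
  move=> ux wx p v pp lp up vin.
  have Pl : predC (@isl _ _) (last (inr ux) p) by rewrite lp.
  have al := same_side stt hEC pp (isT : predC (@isl _ _) (inr ux)) Pl up.
  have [q [v' [op lq ->]]] := gl_proj_r pp up al vin.
  by rewrite lp in lq; case: lq => ->; exact: ppA op.
have LR : forall ux wx p v, path (ptrel gpar) (inl ux) p -> last (inl ux) p = inr wx ->
    uniq (inl ux :: p) -> v \in inl ux :: p -> bB ux :&: bA wx \subset gbeta v.
  move=> ux wx p v pp lp up vp.
  have nall : ~~ all (@isl _ _) p.
    apply/negP => al; have := mem_last (inl ux) p; rewrite lp inE eq_inrl /=.
    by move/(allP al).
  have [p1 [p2 [Ep A1 L1 _]]] := cross_split gl_hE pp (isT : isl (inl ux)) nall.
  rewrite Ep in pp up vp lp.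
  move: pp; rewrite cat_path => /andP[pp1]; rewrite L1 /= => /andP[_ pp2].
  have up' : uniq ((inl ux :: p1) ++ (inr a :: p2)) by exact: up.
  move: up'; rewrite cat_uniq => /and3P[up1 /hasPn hh up2].
  have p0n : inl rB \notin p2.
    apply/negP => p0in; have := hh _ (mem_behead (p0in : inl rB \in behead (inr a :: p2))).
    by rewrite -L1 mem_last.
  have A2 := cross_stay hEC pp2 (isT : predC (@isl _ _) (inr a)) p0n.
  apply/subsetP => x /setIP[xu xw].
  have xN : x \in N.
    by apply: (subsetP SAB); rewrite inE (subsetP (subA wx) _ xw) (subsetP (subB ux) _ xu).
  move: vp; rewrite -cat_cons mem_cat => /orP[vin|vin].
    have [q [v' [op lq ->]]] := gl_proj_l pp1 up1 A1 vin.
    rewrite L1 in lq; case: lq => E.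
    apply: (subsetP (ppB _ _ _ op)); rewrite inE xu -E.
    exact: (subsetP NB).
  have [q [v' [op lq ->]]] := gl_proj_r pp2 up2 A2 vin.
  rewrite last_cat L1 /= lq in lp; case: lp => E.
  apply: (subsetP (ppA _ _ _ op)); rewrite inE E xw andbT.
  exact: (subsetP NA).
move=> u v w op.
case: u op => ux; case: w => wx op.
- by case: op => [p [pp lp up vp]]; exact: LL pp lp up vp.
- by case: op => [p [pp lp up vp]]; exact: LR pp lp up vp.
- have [p [pp lp up vp]] := on_path_sym stt op; rewrite setIC; exact: LR pp lp up vp.
- by case: op => [p [pp lp up vp]]; exact: RR pp lp up vp.
Qed.

End Glue.

Lemma cliqueP (T : finType) (e : rel T) (K : {set T}) :
  reflect (forall x y, x \in K -> y \in K -> x != y -> e x y) (clique e K).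
Proof.
apply: (iffP forallP) => [h x y xK yK xy | h x].
  by have := h x; rewrite xK /= => /forallP/(_ y); rewrite yK xy.
apply/implyP => xK; apply/forallP => y; apply/implyP => yK; apply/implyP.
exact: h.
Qed.

Definition rtd (T : finType) (e : rel T) (S K : {set T}) :=
  exists (V : finType) (par : V -> V) (r : V) (beta : V -> {set T}),
    [/\ rooted par r, tdS e S (ptrel par) beta & K \subset beta r].

Section Main.
Variables (T : finType) (e : rel T).
Hypothesis hs : simple_graph e.
Hypothesis hch : chordal e.

Lemma helly_rtd (V : finType) (par : V -> V) (r : V) (beta : V -> {set T}) (S N : {set T}) :
  rooted par r -> tdS e S (ptrel par) beta -> N \subset S -> clique e N ->
  exists a, N \subset beta a.
Proof.
move=> rt [_ _ cov edg pp] NS /cliqueP Nc.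
have [_ _ conn _] := rooted_is_tree rt.
apply: (helly r conn pp) => x y xN yN.
case: (x =P y) => [<-|/eqP xy].
  by have [v hv] := cov x (subsetP NS x xN); exists v; rewrite hv.
exact: edg (subsetP NS x xN) (subsetP NS y yN) (Nc x y xN yN xy).
Qed.

Lemma glue_finish (S SA SB N K : {set T}) :
  rtd e SA K -> rtd e SB N -> N \subset SA -> clique e N -> SA :&: SB \subset N ->
  (forall y z, y \in SA -> y \notin SB -> z \in SB -> z \notin SA -> ~~ e y z) ->
  S = SA :|: SB -> rtd e S K.
Proof.
move=> [VA [parA [rA [bA [rtA tdA KA]]]]] [VB [parB [rB [bB [rtB tdB NB]]]]] NSA Nc SAB hyp ->.
have [a Na] := helly_rtd rtA tdA NSA Nc.
exists (VB + VA)%type, (gpar parA parB rB a), (inr rA), (gbeta bA bB); split => //.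
- exact: gl_rooted.
- exact: glue_td tdA tdB Na NB SAB hyp.
Qed.

Lemma base_rtd (S K : {set T}) : S = set0 -> K \subset S -> rtd e S K.
Proof.
move=> S0 KS; exists unit, id, tt, (fun _ => set0); split.
- by split => //; exists (fun _ => 0%N) => -[].
- split => //.
  + by move=> _; rewrite S0 sub0set.
  + by move=> _; apply/cliqueP => x y; rewrite inE.
  + by move=> x; rewrite S0 inE.
  + by move=> x y; rewrite S0 inE.
  + by move=> *; rewrite setI0 sub0set.
- by rewrite -S0.
Qed.

Lemma univ_step (S K : {set T}) x : x \in S -> (forall z, z \in S -> z != x -> e x z) ->
  rtd e (S :\ x) (K :\ x) -> K \subset S -> rtd e S K.
Proof.
case: hs => st irr.
move=> xS univ [V [par [r [beta [rt [sub cl cov edg pp] Kr]]]]] KS.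
exists V, par, r, (fun v => x |: beta v); split => //.
- split.
  + move=> v; apply/subsetP => z; rewrite !inE => /orP[/eqP->//|/(subsetP (sub v))].
    by rewrite inE => /andP[].
  + move=> v; apply/cliqueP => y z; rewrite !inE.
    have hB : forall w, w \in beta v -> (w != x) && (w \in S).
      by move=> w /(subsetP (sub v)); rewrite in_setD1.
    move=> /orP[/eqP->|yB] /orP[/eqP->|zB].
    * by rewrite eqxx.
    * by move=> xz; have /andP[zx zS] := hB z zB; apply: univ => //; rewrite eq_sym.
    * by move=> yx; have /andP[_ yS] := hB y yB; rewrite st; apply: univ.
    * by move=> yz; move/cliqueP: (cl v); apply.
  + move=> z zS; case: (z =P x) => [->|/eqP zx]; first by exists r; rewrite !inE eqxx.
    have zS' : z \in S :\ x by rewrite in_setD1 zx zS.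
    by have [v hv] := cov z zS'; exists v; rewrite !inE hv orbT.
  + move=> y z yS zS eyz.
    case: (y =P x) => [Ey|/eqP yx].
      have zx : z != x by apply/eqP => E; move: eyz; rewrite Ey E irr.
      have zS' : z \in S :\ x by rewrite in_setD1 zx zS.
      have [v hv] := cov z zS'; exists v; rewrite !inE Ey eqxx hv. by rewrite orbT.
    case: (z =P x) => [Ez|/eqP zx].
      have yS' : y \in S :\ x by rewrite in_setD1 yx yS.
      by have [v hv] := cov y yS'; exists v; rewrite !inE Ez eqxx hv orbT.
    have yS' : y \in S :\ x by rewrite in_setD1 yx yS.
    have zS' : z \in S :\ x by rewrite in_setD1 zx zS.
    by have [v /andP[h1 h2]] := edg y z yS' zS' eyz; exists v; rewrite !inE h1 h2 !orbT.
  + move=> u v w /pp/subsetP h; apply/subsetP => z; rewrite !inE.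
    by case: (z =P x) => //= _ /andP[zu zw]; apply: h; rewrite inE zu zw.
- apply/subsetP => z zK; rewrite /= !inE; case: (z =P x) => //= /eqP zx.
  by apply: (subsetP Kr); rewrite in_setD1 zx zK.
Qed.

Lemma sep_step (S K : {set T}) (x r0 : T) :
  (forall S' K' : {set T}, #|S'| < #|S| -> K' \subset S' -> clique e K' -> rtd e S' K') ->
  x \in S -> r0 \in S -> r0 != x -> ~~ e x r0 -> K \subset S -> clique e K -> rtd e S K.
Proof.
case: (hs) => st irr.
move=> IH xS r0S r0x r0n KS Kc.
pose R := [set z in S | (z != x) && ~~ e x z].
pose eR := [rel u v | [&& e u v, u \in R & v \in R]].
pose C := [set z | connect eR r0 z].
have r0R : r0 \in R by rewrite inE r0S r0x r0n.
have pathR : forall y p, path eR y p -> all (mem R) p.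
  by move=> y p; elim: p y => //= z p IHp y /andP[/and3P[_ _ zR] pz]; rewrite zR (IHp z pz).
have CR : forall z, z \in C -> z \in R.
  move=> z; rewrite inE => /connectP[p pp ->]; have := mem_last r0 p.
  by rewrite inE => /orP[/eqP->//|/(allP (pathR _ _ pp))].
have r0C : r0 \in C by rewrite inE connect0.
have eRs : symmetric eR by move=> u v; rewrite /= st (andbC (u \in R)).
pose NC := [set s in S | (s \notin C) && [exists c, (c \in C) && e s c]].
have NCx : forall s, s \in NC -> e x s.
  move=> s; rewrite inE => /and3P[sS sC /existsP[c /andP[cC esc]]].
  case sR: (s \in R).
    exfalso; move/negP: sC; apply; rewrite inE.
    apply: (@connect_trans _ _ c); first by move: cC; rewrite inE.
    by apply: connect1; rewrite /= (st c s) esc (CR c cC) sR.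
  move: sR; rewrite inE sS /= => /negbT; rewrite negb_and negbK => /orP[/eqP sx|/negPn//].
  by move: (CR c cC); rewrite inE -sx esc /= !andbF.
have RS : forall z, z \in R -> z \in S by move=> z; rewrite inE => /andP[].
have NCS : forall z, z \in NC -> z \in S by move=> z; rewrite inE => /andP[].
have NCC : forall z, z \in NC -> z \notin C by move=> z; rewrite inE => /and3P[].
have NCc : clique e NC.
  apply/cliqueP => u0 t0 sN tN st0; apply/negPn/negP => nst.
  have xs := NCx u0 sN; have xt := NCx t0 tN.
  move: sN tN; rewrite !inE => /and3P[_ _ /existsP[c1 /andP[c1C e1]]] /and3P[_ _ /existsP[c2 /andP[c2C e2]]].
  have : connect eR c1 c2.
    apply: (@connect_trans _ _ r0).
      by rewrite (sym_connect_sym eRs); move: c1C; rewrite inE.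
    by move: c2C; rewrite inE.
  move=> /connectP[q pq lq].
  apply: (sep_walk hs hch xs xt st0 nst (p := c1 :: rcons q t0)).
  - rewrite /= e1 rcons_path -lq (st c2) e2 andbT.
    by apply: sub_path pq => u v /and3P[].
  - by rewrite /= last_rcons.
  - move=> z; rewrite inE mem_rcons inE.
    have hR : forall z, z \in c1 :: q -> [|| z == u0, z == t0 | (z != x) && ~~ e x z].
      move=> w wq; have : w \in R.
        move: wq; rewrite inE => /orP[/eqP->|]; first exact: CR.
        by move/(allP (pathR _ _ pq)).
      by rewrite inE => /and3P[_ -> ->]; rewrite !orbT.
    case/orP => [/eqP->|/orP[/eqP->|zq]]; first by apply: hR; rewrite inE eqxx.
      by rewrite eqxx orbT.
    by apply: hR; rewrite inE zq orbT.
pose S1 := C :|: NC; pose S2 := S :\: C.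
have CS : forall z, z \in C -> z \in S by move=> z /CR /RS.
have xC : x \notin C by apply/negP => /CR; rewrite inE eqxx andbF.
have xNC : x \notin NC by apply/negP => /NCx; rewrite irr.
have hS1 : #|S1| < #|S|.
  apply: proper_card; apply/properP; split.
    by apply/subsetP => z; rewrite in_setU => /orP[/CS|/NCS].
  by exists x => //; rewrite in_setU negb_or xC xNC.
have hS2 : #|S2| < #|S|.
  apply: proper_card; apply/properP; split; first exact: subsetDl.
  by exists r0 => //; rewrite in_setD r0C.
have NCS1 : NC \subset S1 by exact: subsetUr.
have NCS2 : NC \subset S2.
  by apply/subsetP => z zN; rewrite in_setD (NCC z zN) (NCS z zN).
have S12 : S1 :&: S2 \subset NC.
  apply/subsetP => z; rewrite in_setI in_setU in_setD.
  by case: (z \in C) => //= /andP[].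
have noedge : forall y z, y \in C -> z \in S -> z \notin C -> z \notin NC -> ~~ e y z.
  move=> y z yC zS zC; apply: contra => eyz.
  rewrite inE zS zC /=; apply/existsP; exists y; rewrite yC st.
  by [].
have US : S = S1 :|: S2.
  apply/setP => z; rewrite !in_setU in_setD.
  case zC: (z \in C) => /=; first by rewrite (CS z zC).
  by case zN: (z \in NC) => //=; rewrite (NCS z zN).
have InS1 : forall z, z \in S1 -> z \notin S2 -> z \in C.
  move=> z; rewrite in_setU in_setD => /orP[//|zN].
  by rewrite (NCS z zN) (negbTE (NCC z zN)).
have InS2 : forall z, z \in S2 -> z \notin S1 -> [/\ z \in S, z \notin C & z \notin NC].
  by move=> z; rewrite in_setU in_setD negb_or => /andP[zC zS] /andP[_ zN].
case: (boolP (K \subset S2)) => KS2.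
  apply: (@glue_finish S S2 S1 NC K).
  - exact: IH.
  - exact: IH.
  - exact: NCS2.
  - exact: NCc.
  - by rewrite setIC.
  - move=> y z yS2 yS1 zS1 zS2; have [yS yC yN] := InS2 y yS2 yS1.
    by rewrite st; apply: noedge => //; exact: InS1.
  - by rewrite setUC.
have [k kK kS2] : exists2 k, k \in K & k \notin S2 by apply/subsetPn.
have kC : k \in C by move: kS2; rewrite in_setD (subsetP KS k kK) andbT negbK.
have KS1 : K \subset S1.
  apply/subsetP => z zK; rewrite in_setU.
  case zC: (z \in C) => //=.
  case: (z =P k) => [E|/eqP zk]; first by rewrite E kC in zC.
  have ekz : e k z by move/cliqueP: Kc; apply => //; rewrite eq_sym.
  have zS := subsetP KS z zK.
  apply/negPn/negP => zN; have := noedge k z kC zS (negbT zC) zN.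
  by rewrite ekz.
apply: (@glue_finish S S1 S2 NC K).
- exact: IH.
- exact: IH.
- exact: NCS1.
- exact: NCc.
- exact: S12.
- move=> y z yS1 yS2 zS2 zS1; have [zS zC zN] := InS2 z zS2 zS1.
  by apply: noedge => //; exact: InS1.
- exact: US.
Qed.

End Main.

Lemma exists_rtd (T : finType) (e : rel T) (hs : simple_graph e) (hch : chordal e) n :
  forall S K : {set T}, #|S| <= n -> K \subset S -> clique e K -> rtd e S K.
Proof.
elim: n => [|n IH] S K hS KS Kc.
  by apply: base_rtd => //; apply/eqP; rewrite -cards_eq0 -leqn0.
case: (set_0Vmem S) => [S0|[x xS]]; first exact: base_rtd.
have IH' : forall S' K' : {set T}, #|S'| < #|S| -> K' \subset S' -> clique e K' -> rtd e S' K'.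
  by move=> S' K' h; apply: IH; rewrite -ltnS (leq_trans h hS).
case: (boolP [exists r, [&& r \in S, r != x & ~~ e x r]]) => [/existsP[r0 /and3P[r0S r0x r0n]] | /existsPn none].
  exact: (sep_step hs hch IH' xS r0S r0x r0n KS Kc).
apply: (univ_step hs xS) => //.
  by move=> z zS zx; have := none z; rewrite zS zx /= negbK.
apply: IH'.
- by rewrite (cardsD1 x S) xS add1n ltnS.
- exact: setSD.
- apply/cliqueP => a b /setD1P[_ aK] /setD1P[_ bK] ab.
  by move/cliqueP: Kc; apply.
Qed.

Theorem proposition4 (T : finType) (e : rel T) (V : finType) (t : rel V)
    (beta : V -> {set T}) :
  simple_graph e -> chordal e -> proper_td e t beta ->
  bags beta = MaxClq e.
Proof.
move=> hs hch [td prop].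
case: (td) => tt cov edg pp.
have tt' := tt; case: tt' => _ /card_gt0P[v0 _] conn _.
have hellyd : forall K, clique e K -> exists v, K \subset beta v.
  move=> K /cliqueP Kc; apply: (helly v0 conn pp) => x y xK yK.
  case: (x =P y) => [<-|/eqP xy].
    by have [v hv] := cov x; exists v; rewrite hv.
  exact: edg (Kc x y xK yK xy).
have c0 : clique e set0 by apply/cliqueP => x y; rewrite inE.
have [V' [par [r [beta' [rt [sub cl cov' edg' pp'] _]]]]] :=
  exists_rtd hs hch (leqnn #|[set: T]|) (sub0set [set: T]) c0.
have td' : tree_decomposition e (ptrel par) beta'.
  split => //; first exact: rooted_is_tree rt.
    by move=> x; apply: cov'; rewrite inE.
  by move=> x y; apply: edg'; rewrite inE.
have le' : td_le beta' beta by move=> v'; exact: hellyd (cl v').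
have hsub : bags beta \subset bags beta'.
  case: (boolP (bags beta \subset bags beta')) => // h; exfalso.
  by apply: (prop _ _ _ td'); split => //; exact/negP.
have clq : forall v, clique e (beta v).
  move=> v; have : beta v \in bags beta by apply: imset_f.
  by move/(subsetP hsub)/imsetP => [v' _ ->].
apply/setP => K; rewrite /MaxClq inE; apply/idP/idP.
  case/imsetP => v _ ->; apply/maxsetP; split; first exact: clq.
  move=> B Bc vB; have [w Bw] := hellyd B Bc.
  case: (beta w =P beta v) => [E|/eqP ne].
    by apply/eqP; rewrite eqEsubset vB andbT -E.
  have pr : beta v \proper beta w by rewrite properEneq eq_sym ne (subset_trans vB Bw).
  have [b2 [td2 le2 nb2]] := remove_bag (leqnn _) td (ex_intro _ w pr).
  exfalso; apply: (prop _ _ _ td2); split => //.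
  move/subsetP => h; have : beta v \in bags b2 by apply: h; apply: imset_f.
  by case/imsetP => z _ E; move: (nb2 z); rewrite E eqxx.
case/maxsetP => Kc Kmax; have [v Kv] := hellyd K Kc.
by rewrite -(Kmax _ (clq v) Kv); apply: imset_f.
Qed.
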